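(* Let $s\ge1$, $M=(p^s-1)/2$, $1\le l\le g$ and $\delta_l=(2g+1)M-lp^s$. Then, as rational functions of $z$, $$(-1)^{\delta_l}\,(z_{n-2l}-z_n)^l\;\tilde I^{[lp^s-1]}_{p^s}(z)=x_1^{M}\,Q^{l,s}(x_2,\dots,x_{n-1}),$$ where $x_1,\dots,x_{n-1}$ are the rational functions of $z$ defined below. Moreover, the constant term of $Q^{l,s}$ equals $\binom{M}{l}\big(0,\dots,0,\tfrac{l}{M},1,\dots,1\big)$, with $0$ repeated $2g-2l$ times, $l/M$ in position $2g-2l+1$, and $1$ repeated $2l$ times.
   Context: Let $p$ be an odd prime, $g\ge1$, $n=2g+1$, with $p>n$; $z=(z_1,\dots,z_n)$. Put $M=(p^s-1)/2$, $\Phi_{p^s}(x,z)=\prod_{i=1}^n(x-z_i)^{M}$; substitute $x=v+z_n$ and expand $\Big(\frac{\Phi_{p^s}(v+z_n,z)}{v+z_n-z_1},\dots,\frac{\Phi_{p^s}(v+z_n,z)}{v+z_n-z_{n-1}},\frac{\Phi_{p^s}(v+z_n,z)}{v}\Big)=\sum_i\tilde P^i_{p^s}(z)v^i$ with $\tilde P^i_{p^s}(z)\in\mathbb Z[z]^n$; set $\tilde I^{[lp^s-1]}_{p^s}(z)=\tilde P^{lp^s-1}_{p^s}(z)$. Fix $1\le l\le g$. Define $x_1=\prod_{i=1}^{n-2l}(z_i-z_n)$; $x_i=\frac{z_{n-2l}-z_n}{z_{i-1}-z_n}$ for $2\le i\le n-2l$; $x_i=\frac{z_i-z_n}{z_{n-2l}-z_n}$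 for $n-2l+1\le i\le n-1$. Define the polynomial vector $Q^{l,s}=(Q^{l,s}_1,\dots,Q^{l,s}_n)$ in $x_2,\dots,x_{n-1}$ as follows. Write $X(a)=\prod_{i=2}^{n-2l}x_i^{a_{i-1}}\prod_{i=n-2l+1}^{n-1}x_i^{a_i}$ for $a=(a_1,\dots,a_{n-1})$; all sums below are over $a\in\mathbb Z^{n-1}$ with $0\le a_i\le M$. For $1\le j\le n-2l-1$: $Q^{l,s}_j=x_{j+1}\sum\binom{M-1}{a_j}\prod_{i\ne j}\binom{M}{a_i}X(a)$, summed over $a$ with $a_1+\dots+a_{n-2l}=a_{n-2l+1}+\dots+a_{n-1}+l-1$. For $j=n-2l$: $Q^{l,s}_j=\sum\binom{M-1}{a_j}\prod_{i\ne j}\binom{M}{a_i}X(a)$, same summation condition (with $l-1$). For $n-2l<j\le n-1$: $Q^{l,s}_j=\sum\binom{M-1}{a_j}\prod_{i\ne j}\binom{M}{a_i}X(a)$, summed over $a$ with $a_1+\dots+a_{n-2l}=a_{n-2l+1}+\dots+a_{n-1}+l$. $Q^{l,s}_n=\sum\prod_{i=1}^{n-1}\binom{M}{a_i}X(a)$, summed over $a$ with $a_1+\dots+a_{n-2l}=a_{n-2l+1}+\dots+a_{n-1}+l$. (Products $\prod_{i\ne j}$ are over $i\in\{1,\dots,n-1\}\setminus\{j\}$.) *)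

(* Defs.v *)
From HB Require Import structures.
From mathcomp Require Import all_boot all_order all_algebra.
From mathcomp Require Import mpoly.
Unset Printing Implicit Defensive.
Import Order.TTheory GRing.Theory Num.Theory.
Local Open Scope ring_scope.

(* Conventions: n = 2g+1.  The points z_1..z_n are given as z : nat -> F
   (only z 1, ..., z n matter).  Vectors indexed 1..n are given as functions
   of j : nat (only j = 1..n matter).  Exponent vectors a = (a_1,..,a_{n-1})
   are finite functions 'I_(n-1) -> 'I_(M+1), with a_i = a (i-1). *)

Definition nn (g : nat) : nat := (2 * g).+1.
Definition MM (p s : nat) : nat := ((p ^ s).-1)./2.
Definition cut (g l : nat) : nat := (nn g - 2 * l)%N.

Section Defs.
Variable F : fieldType.

(* Phi_{p^s}(v + z_n, z) = prod_{i=1}^n (v + z_n - z_i)^M, as a polynomial in v *)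
Definition PhiV (g M : nat) (z : nat -> F) : {poly F} :=
  \prod_(1 <= i < (nn g).+1) ('X + (z (nn g) - z i)%:P) ^+ M.

Definition PhiComp (g M : nat) (z : nat -> F) (j : nat) : {poly F} :=
  PhiV g M z %/ ('X + (z (nn g) - z j)%:P).

Definition Itilde (p s g l : nat) (z : nat -> F) (j : nat) : F :=
  (PhiComp g (MM p s) z j)`_(l * p ^ s - 1)%N.

Definition x1 (g l : nat) (z : nat -> F) : F :=
  \prod_(1 <= i < (cut g l).+1) (z i - z (nn g)).

Definition xval (g l : nat) (z : nat -> F) (i : nat) : F :=
  let n := nn g in
  if (i <= cut g l)%N then (z (cut g l) - z n) / (z (i.-1)%N - z n)
  else (z i - z n) / (z (cut g l) - z n).

(* the point (x_2, ..., x_{n-1}); mpoly variable k corresponds to x_{k+2} *)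
Definition xpt (g l : nat) (z : nat -> F) : 'I_(nn g - 2) -> F :=
  fun k => xval g l z (k.+2).

Definition xvar (g : nat) (i : nat) : {mpoly F[nn g - 2]} :=
  if (insub (i - 2)%N : option 'I_(nn g - 2)) is Some m then 'X_m else 0.

Definition aa (g M : nat) (a : {ffun 'I_(nn g - 1) -> 'I_M.+1}) (i : nat) : nat :=
  if (insub (i - 1)%N : option 'I_(nn g - 1)) is Some m then nat_of_ord (a m) else 0.

Definition Xmon (g l M : nat) (a : {ffun 'I_(nn g - 1) -> 'I_M.+1})
  : {mpoly F[nn g - 2]} :=
  (\prod_(2 <= i < (cut g l).+1) xvar g i ^+ aa g M a (i - 1)%N) *
  (\prod_((cut g l).+1 <= i < nn g) xvar g i ^+ aa g M a i).

Definition acond (g l M c : nat) (a : {ffun 'I_(nn g - 1) -> 'I_M.+1}) : bool :=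
  (\sum_(1 <= i < (cut g l).+1) aa g M a i
  == \sum_((cut g l).+1 <= i < nn g) aa g M a i + c)%N.

Definition acoef (g M j : nat) (a : {ffun 'I_(nn g - 1) -> 'I_M.+1}) : nat :=
  (\prod_(1 <= i < nn g) 'C(if i == j then (M - 1)%N else M, aa g M a i))%N.

Definition Qsum (g l M c j : nat) : {mpoly F[nn g - 2]} :=
  \sum_(a : {ffun 'I_(nn g - 1) -> 'I_M.+1} | acond g l M c a)
     (acoef g M j a)%:R *: Xmon g l M a.

Definition Qls (p s g l : nat) (j : nat) : {mpoly F[nn g - 2]} :=
  let n := nn g in let M := MM p s in
  if (j < cut g l)%N then xvar g j.+1 * Qsum g l M (l - 1) j
  else if (j == cut g l)%N then Qsum g l M (l - 1) j
  else Qsum g l M l j.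

End Defs.

Arguments PhiV {F} g M z.
Arguments PhiComp {F} g M z j.
Arguments Itilde {F} p s g l z j.
Arguments x1 {F} g l z.
Arguments xval {F} g l z i.
Arguments xpt {F} g l z k.

(* Main.v *)
Require Import Defs.
From HB Require Import structures.
From mathcomp Require Import all_boot all_order all_algebra.
From mathcomp Require Import mpoly.
From mathcomp Require Import zify ring.
Import Order.TTheory GRing.Theory Num.Theory.
Local Open Scope ring_scope.

Section Arith.
Local Open Scope nat_scope.
Lemma arith_deg (lps M A B E2 j n c l lM : nat) :
  lps = 2*lM + l -> E2 + (c < j < n) = 2*lM - M -> M <= lM -> B <= E2 -> j <= n -> c < n ->
  1 <= l -> 1 <= M ->
  ((lps - 1 - (M - (j == n))) == A + (E2 - B)) = (A == B + (if j <= c then l - 1 else l)).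
Proof.
move=> h1 h2 h3 h4 h5 h6 h7 h8.
case: (leqP j c) => hjc.
  have -> : (j == n) = false by apply/negP => /eqP; lia.
  have e : (c < j < n) = false by apply/negP; lia.
  rewrite e in h2.
  apply/eqP/eqP => H; lia.
case: (eqVneq j n) => hjn.
  have e : (c < j < n) = false by apply/negP; lia.
  rewrite e in h2.
  apply/eqP/eqP => H; lia.
have e : (c < j < n) = true by apply/andP; lia.
rewrite e in h2.
apply/eqP/eqP => H; lia.
Qed.

Lemma arith_sign (nM cM lM lps l c j E1 A B : nat) :
  nM = cM + 2 * lM -> lps = 2 * lM + l -> E1 + (0 < j < c.+1) = cM ->
  A = B + (if j <= c then l - 1 else l) -> 1 <= j -> 1 <= l -> A <= E1 ->
  E1 - A + B = nM - lps.
Proof.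
move=> h1 h2 h3 + h5 h6 h7.
case: (leqP j c) => hjc h4.
  have e : (0 < j < c.+1) = true by apply/andP; lia.
  rewrite e in h3; lia.
have e : (0 < j < c.+1) = false by apply/negP; lia.
rewrite e in h3; lia.
Qed.

End Arith.
Arguments arith_sign {nM cM lM lps l c j E1 A B}.

Section Main.
Variable F : fieldType.
Variables (g l M : nat) (z : nat -> F).
Hypothesis hl : (1 <= l <= g)%N.
Hypothesis hM : (1 <= M)%N.
Local Notation n := (nn g).
Local Notation c := (cut g l).

Lemma cfacts : (c + 2 * l = n /\ 1 <= c /\ c < n /\ 0 < g)%N.
Proof. rewrite /cut /nn; lia. Qed.

Definition q (i:nat) : {poly F} := 'X + (z n - z i)%:P.
Definition ee (j i : nat) : nat := if i == j then (M - 1)%N else M.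

Lemma PhiV_fact j : (1 <= j <= n)%N ->
  PhiV g M z = q j * ('X^(M - (j == n)) * \prod_(1 <= i < n) q i ^+ ee j i).
Proof.
move=> hj; have [h1 [h2 [h3 h4]]] := cfacts.
rewrite /PhiV big_nat_recr /=; last by rewrite /nn.
have qn : 'X + (z n - z n)%:P = 'X :> {poly F} by rewrite subrr addr0.
rewrite qn.
have [jn|jn] := eqVneq j n.
  rewrite jn /q qn /= subn1.
  rewrite (eq_big_nat _ _ (F2 := fun i => ('X + (z n - z i)%:P) ^+ ee n i)); last first.
    by move=> i /andP[_ hi]; rewrite /ee ifN // neq_ltn hi.
  by rewrite [RHS]mulrA -exprS prednK // mulrC.
rewrite subn0 mulrCA [LHS]mulrC; congr (_ * _).
have -> : \prod_(1 <= i < n) ('X + (z n - z i)%:P) ^+ M =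
   \prod_(1 <= i < n) (q i ^+ ee j i * (if i == j then q i else 1)).
  apply: eq_big_nat => i _; rewrite /ee /q; case: eqP => _; last by rewrite mulr1.
  by rewrite -exprSr subn1 prednK.
rewrite big_split /= -big_mkcond big_nat1_eq.
have -> : (1 <= j < n)%N by move: hj jn; rewrite /nn; lia.
by rewrite mulrC.
Qed.

Lemma Itilde_eq (p s j : nat) : (1 <= j <= n)%N -> MM p s = M -> (M <= l * p ^ s - 1)%N ->
  Itilde p s g l z j =
  (\prod_(1 <= i < n) q i ^+ ee j i)`_(l * p ^ s - 1 - (M - (j == n)))%N.
Proof.
move=> hj hMM hK; rewrite /Itilde /PhiComp hMM (PhiV_fact _ hj) mulKp; last first.
  exact: monic_neq0 (monicXaddC _).
rewrite coefXnM ifN //; rewrite -leqNgt; apply: leq_trans hK; exact: leq_subr.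
Qed.

Lemma sum_widen (V : zmodType) e N (G : nat -> V) : (e <= N)%N ->
  \sum_(b < e.+1) G b *+ 'C(e, b) = \sum_(b < N.+1) G b *+ 'C(e, b).
Proof.
move=> he; rewrite (@big_ord_widen _ _ _ e.+1 N.+1 (fun b => G b *+ 'C(e, b))) ?ltnS //.
rewrite big_mkcond /=; apply: eq_bigr => b _; case: ltnP => // hb.
by rewrite bin_small // mulr0n.
Qed.

Definition xe (j i b : nat) : nat := if (i <= c)%N then (ee j i - b)%N else b.
Definition dg (j i b : nat) : nat := if (i <= c)%N then b else (ee j i - b)%N.
Definition Tt j i b : {poly F} :=
  'X^(dg j i b) * ((z n - z i) ^+ xe j i b)%:P *+ 'C(ee j i, b).

Lemma ee_le j i : (ee j i <= M)%N.
Proof. by rewrite /ee; case: eqP => _ //; exact: leq_subr. Qed.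

Lemma q_exp j i : q i ^+ ee j i = \sum_(b < M.+1) Tt j i b.
Proof.
rewrite /Tt /xe /dg /q; case: (i <= c)%N.
  rewrite addrC exprDn (sum_widen _ _ _ (fun b => ((z n - z i)%:P ^+ (ee j i - b) * 'X ^+ b)) (ee_le j i)).
  by apply: eq_bigr => b _; rewrite polyC_exp mulrC.
rewrite exprDn (sum_widen _ _ _ (fun b => ('X ^+ (ee j i - b) * (z n - z i)%:P ^+ b)) (ee_le j i)).
by apply: eq_bigr => b _; rewrite polyC_exp.
Qed.

Lemma rng_full (R : Type) (idx : R) (op : Monoid.com_law idx) N (G : nat -> R) :
  \big[op/idx]_(1 <= i < N) G i = \big[op/idx]_(k < N - 1) G k.+1.
Proof. by rewrite big_add1 subn1 big_mkord. Qed.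

Lemma aaS (f : {ffun 'I_(n - 1) -> 'I_M.+1}) (k : 'I_(n - 1)) :
  aa g M f k.+1 = f k.
Proof. by rewrite /aa subSS subn0 valK. Qed.

Lemma prod_expand j : \prod_(1 <= i < n) q i ^+ ee j i =
  \sum_(f : {ffun 'I_(n - 1) -> 'I_M.+1}) \prod_(1 <= i < n) Tt j i (aa g M f i).
Proof.
rewrite rng_full.
rewrite (eq_bigr (fun k : 'I_(n - 1) => \sum_(b < M.+1) Tt j k.+1 b)); last first.
  by move=> k _; rewrite q_exp.
rewrite bigA_distr_bigA /=; apply: eq_bigr => f _.
by rewrite rng_full; apply: eq_bigr => k _; rewrite aaS.
Qed.

Lemma prod_T j (b : nat -> nat) : \prod_(1 <= i < n) Tt j i (b i) =
  'X^(\sum_(1 <= i < n) dg j i (b i)) *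
  (\prod_(1 <= i < n) (z n - z i) ^+ xe j i (b i))%:P *+
  \prod_(1 <= i < n) 'C(ee j i, b i).
Proof.
rewrite /Tt -mulr_natr natr_prod -prodrXr rmorph_prod -!big_split /=.
by apply: eq_bigr => i _; rewrite mulr_natr.
Qed.

Lemma coef_T D (A : F) m d :
  ('X^D * A%:P *+ m : {poly F})`_d = (A *+ m) * (d == D)%:R.
Proof. by rewrite coefMn mulrC coefCM coefXn mulrnAl. Qed.

Lemma sumee j m1 m2 : (m1 <= m2)%N ->
  (\sum_(m1 <= i < m2) ee j i + (m1 <= j < m2) = (m2 - m1) * M)%N.
Proof.
elim: m2 => [|m2 IH] h.
  have -> : m1 = 0%N by lia.
  by rewrite big_geq // andbF.
case: (leqP m1 m2) => h2; last first.
  have -> : m1 = m2.+1 by lia.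
  rewrite big_geq // subnn mul0n; case: leqP => //= ?; lia.
rewrite big_nat_recr //= [ee j m2]/ee subSn // mulSn; move: (IH h2).
case: eqP => [e|hne].
  have -> : (m1 <= j < m2)%N = false by rewrite -e ltnn andbF.
  have -> : (m1 <= j < m2.+1)%N = true by rewrite -e h2 ltnSn.
  move=> /= e2. lia.
have -> : (m1 <= j < m2.+1)%N = (m1 <= j < m2)%N.
  by apply/idP/idP => /andP[? ?]; apply/andP; split => //; lia.
move=> e; lia.
Qed.

Local Notation xv := (xpt g l z).

Lemma meval_xvar i : (2 <= i < n)%N -> (xvar F g i).@[xv] = xval g l z i.
Proof.
move=> hi; rewrite /xvar; case: insubP => [m _ em|].
  by rewrite mevalXU /xpt em; congr xval; lia.
by move/negP; case; rewrite /nn in hi *; lia.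
Qed.

Lemma meval_Xmon (a : {ffun 'I_(n - 1) -> 'I_M.+1}) :
  (Xmon F g l M a).@[xv] =
  (\prod_(1 <= i < c) xval g l z i.+1 ^+ aa g M a i) *
  \prod_(c.+1 <= i < n) xval g l z i ^+ aa g M a i.
Proof.
have [h1 [h2 [h3 h4]]] := cfacts.
rewrite /Xmon rmorphM !rmorph_prod big_add1 /=; congr (_ * _).
  apply: eq_big_nat => i hi; rewrite rmorphXn /= meval_xvar ?subn1 //; lia.
apply: eq_big_nat => i hi; rewrite rmorphXn /= meval_xvar //; lia.
Qed.

Lemma meval_Qsum c' j :
  (Qsum F g l M c' j).@[xv] = \sum_(a : {ffun 'I_(n - 1) -> 'I_M.+1} | acond g l M c' a)
     (acoef g M j a)%:R * (Xmon F g l M a).@[xv].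
Proof. by rewrite /Qsum rmorph_sum; apply: eq_bigr => a _; rewrite /= mevalZ. Qed.

Hypothesis zd : forall i j : nat, (1 <= i)%N -> (i < j)%N -> (j <= n)%N -> z i != z j.

Lemma wnz i : (1 <= i < n)%N -> z i - z n != 0.
Proof. by move=> /andP[h1 h2]; rewrite subr_eq0 zd // ltnW. Qed.

Lemma prod_wnz m1 m2 (e : nat -> nat) : (1 <= m1)%N -> (m2 <= n)%N ->
  \prod_(m1 <= i < m2) (z i - z n) ^+ e i != 0.
Proof.
move=> h1 h2; rewrite prodf_seq_neq0; apply/allP => i; rewrite mem_index_iota => hi /=.
rewrite expf_neq0 // wnz //; lia.
Qed.

Lemma sum_split (G : nat -> nat) :
  (\sum_(1 <= i < n) G i = \sum_(1 <= i < c.+1) G i + \sum_(c.+1 <= i < n) G i)%N.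
Proof. have [h1 [h2 [h3 h4]]] := cfacts; rewrite (big_cat_nat _ (n := c.+1)) //. Qed.

Lemma prod_split (G : nat -> F) :
  \prod_(1 <= i < n) G i = \prod_(1 <= i < c.+1) G i * \prod_(c.+1 <= i < n) G i.
Proof. have [h1 [h2 [h3 h4]]] := cfacts; rewrite (big_cat_nat _ (n := c.+1)) //. Qed.

Lemma magnitude j (b : nat -> nat) : (1 <= j <= n)%N ->
  (forall i, (1 <= i < n)%N -> (b i <= ee j i)%N) ->
  (\sum_(1 <= i < c.+1) b i = \sum_(c.+1 <= i < n) b i + (if (j <= c)%N then l - 1 else l))%N ->
  (z c - z n) ^+ l * \prod_(1 <= i < n) (z i - z n) ^+ xe j i (b i)
  = x1 g l z ^+ M * (if (j < c)%N then xval g l z j.+1 else 1) *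
    ((\prod_(1 <= i < c) xval g l z i.+1 ^+ b i) *
     \prod_(c.+1 <= i < n) xval g l z i ^+ b i).
Proof.
move=> hj hb hA; have [h1 [h2 [h3 h4]]] := cfacts.
set wc := z c - z n.
have wcnz : wc != 0 by apply: wnz; lia.
set c' := if (j <= c)%N then (l - 1)%N else l.
set Pel := \prod_(1 <= i < c.+1) (z i - z n) ^+ (ee j i - b i).
set P3 := \prod_(c.+1 <= i < n) (z i - z n) ^+ b i.
set P1 := \prod_(1 <= i < c) (z i - z n) ^+ b i.
set A0 := (\sum_(1 <= i < c) b i)%N.
set B := (\sum_(c.+1 <= i < n) b i)%N.
set Wj := if (j <= c)%N then z j - z n else 1.
set fac := if (j < c)%N then xval g l z j.+1 else 1.
have eL : \prod_(1 <= i < n) (z i - z n) ^+ xe j i (b i) = Pel * P3.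
  rewrite prod_split /Pel /P3; congr (_ * _); apply: eq_big_nat => i hi; rewrite /xe.
    by rewrite ifT //; lia.
  by rewrite ifF //; lia.
have eX1 : \prod_(1 <= i < c) xval g l z i.+1 ^+ b i = wc ^+ A0 / P1.
  rewrite /P1 /A0 -prodrXr -prodfV -big_split /=; apply: eq_big_nat => i hi.
  rewrite /xval ifT; last by lia.
  by rewrite expr_div_n.
have eX2 : \prod_(c.+1 <= i < n) xval g l z i ^+ b i = P3 / wc ^+ B.
  rewrite /P3 /B -prodrXr -prodfV -big_split /=; apply: eq_big_nat => i hi.
  rewrite /xval ifF; last by lia.
  by rewrite expr_div_n.
have ex1 : x1 g l z ^+ M = \prod_(1 <= i < c.+1) (z i - z n) ^+ M.
  by rewrite /x1 prodrXl.
have key : Pel * P1 * wc ^+ b c * Wj = x1 g l z ^+ M.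
  rewrite ex1.
  have -> : \prod_(1 <= i < c.+1) (z i - z n) ^+ M =
    \prod_(1 <= i < c.+1) ((z i - z n) ^+ (ee j i - b i) * (z i - z n) ^+ b i *
                           (if i == j then z i - z n else 1)).
    apply: eq_big_nat => i hi; have hbi := hb i ltac:(lia).
    move: hbi; rewrite /ee; case: eqP => _ hbi.
      by rewrite -exprD -exprSr; congr (_ ^+ _); lia.
    by rewrite mulr1 -exprD; congr (_ ^+ _); lia.
  rewrite !big_split /= -big_mkcond big_nat1_eq.
  rewrite [\prod_(1 <= i < c.+1) (z i - z n) ^+ b i]big_nat_recr //=.
  have -> : (0 < j < c.+1)%N = (j <= c)%N by move/andP: hj => [? ?]; apply/idP/idP; lia.
  by rewrite /Wj /Pel /P1 !mulrA.
have hA0 : (A0 + b c = B + c')%N by rewrite -hA /A0 big_nat_recr.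
have hfw : fac * Wj * wc ^+ c' = wc ^+ l.
  rewrite /fac /Wj /c'; case: (ltngtP j c) => hjc /=.
  - rewrite /xval ifT; last by lia.
    rewrite /= divfK ?wnz //; last by lia.
    by rewrite -/wc -exprS subn1 prednK //; lia.
  - by rewrite !mul1r.
  - by rewrite mul1r hjc -/wc -exprS subn1 prednK //; lia.
rewrite eL eX1 eX2 -key -hfw.
have eA : wc ^+ A0 = wc ^+ B * wc ^+ c' / wc ^+ b c.
  by rewrite -exprD -hA0 exprD mulfK // expf_neq0.
rewrite eA.
have P1nz : P1 != 0 by rewrite /P1; apply: prod_wnz; lia.
have bcnz : wc ^+ b c != 0 by rewrite expf_neq0.
have Bnz : wc ^+ B != 0 by rewrite expf_neq0.
by field; rewrite P1nz bcnz Bnz.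
Qed.

Lemma range_le (G1 G2 : nat -> nat) m1 m2 : (1 <= m1)%N -> (m2 <= n)%N ->
  (forall i, (1 <= i < n)%N -> G1 i <= G2 i)%N ->
  (\sum_(m1 <= i < m2) G1 i <= \sum_(m1 <= i < m2) G2 i)%N.
Proof.
move=> h1 h2 h; rewrite big_seq_cond [X in (_ <= X)%N]big_seq_cond.
apply: leq_sum => i /andP[hi _]; apply: h; rewrite mem_index_iota in hi; lia.
Qed.

Lemma range_B (G1 G2 : nat -> nat) m1 m2 : (1 <= m1)%N -> (m2 <= n)%N ->
  (forall i, (1 <= i < n)%N -> G1 i <= G2 i)%N ->
  (\sum_(m1 <= i < m2) (G2 i - G1 i) = \sum_(m1 <= i < m2) G2 i - \sum_(m1 <= i < m2) G1 i)%N.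
Proof.
move=> h1 h2 h; rewrite big_seq_cond [X in (_ = X - _)%N]big_seq_cond [X in (_ = _ - X)%N]big_seq_cond.
rewrite -sumnB //= => i /andP[hi _]; apply: h; rewrite mem_index_iota in hi; lia.
Qed.

Lemma term_eq j ps (f : {ffun 'I_(n - 1) -> 'I_M.+1}) : (1 <= j <= n)%N -> ps = (2 * M).+1 ->
  (-1) ^+ (n * M - l * ps) * (z c - z n) ^+ l *
   ((\prod_(1 <= i < n) (z n - z i) ^+ xe j i (aa g M f i)) *+
      \prod_(1 <= i < n) 'C(ee j i, aa g M f i) *
    ((l * ps - 1 - (M - (j == n)))%N == \sum_(1 <= i < n) dg j i (aa g M f i))%:R)
  = x1 g l z ^+ M * (if (j < c)%N then xval g l z j.+1 else 1) *
    (if acond g l M (if (j <= c)%N then (l - 1)%N else l) f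
     then (acoef g M j f)%:R * (Xmon F g l M f).@[xv] else 0).
Proof.
move=> hj hps; have [h1 [h2 [h3 h4]]] := cfacts.
set b := aa g M f.
have eac : acoef g M j f = \prod_(1 <= i < n) 'C(ee j i, b i) by [].
case: (boolP (all (fun i => b i <= ee j i)%N (index_iota 1 n))) => [/allP hle | /allPn [i hi hnot]];
  last first.
  have C0 : (\prod_(1 <= i < n) 'C(ee j i, b i) = 0)%N.
    apply/eqP; rewrite -leqn0 leqNgt; apply/negP => /gt0_prodn_seq h.
    by move: (h i hi isT); rewrite bin_gt0 => hh; move/negP: hnot.
  rewrite eac C0 mulr0n mul0r mulr0; case: acond; by rewrite ?mul0r mulr0.
have hle' : forall i, (1 <= i < n)%N -> (b i <= ee j i)%N.
  by move=> i hi; apply: hle; rewrite mem_index_iota.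
set A := (\sum_(1 <= i < c.+1) b i)%N.
set B := (\sum_(c.+1 <= i < n) b i)%N.
set E1 := (\sum_(1 <= i < c.+1) ee j i)%N.
set E2 := (\sum_(c.+1 <= i < n) ee j i)%N.
have s1 := sumee j 1 c.+1 (ltn0Sn _).
have s2 := sumee j c.+1 n h3.
have hAle : (A <= E1)%N by apply: range_le => //; lia.
have hBle : (B <= E2)%N by apply: range_le.
have eDg : (\sum_(1 <= i < n) dg j i (b i) = A + (E2 - B))%N.
  rewrite sum_split /A /E2 /B -(@range_B b (ee j) c.+1 n (ltn0Sn _) (leqnn _) hle'); congr (_ + _).
    by apply: eq_big_nat => i hi; rewrite /dg ifT //; lia.
  by apply: eq_big_nat => i hi; rewrite /dg ifF //; lia.
have eXe : (\sum_(1 <= i < n) xe j i (b i) = (E1 - A) + B)%N.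
  rewrite sum_split /A /E1 /B -(@range_B b (ee j) 1 c.+1 (ltn0Sn _) h3 hle'); congr (_ + _).
    by apply: eq_big_nat => i hi; rewrite /xe ifT //; lia.
  by apply: eq_big_nat => i hi; rewrite /xe ifF //; lia.
have eacond : acond g l M (if (j <= c)%N then (l - 1)%N else l) f =
   (A == B + (if (j <= c)%N then l - 1 else l))%N by [].
have hn : (n = c + 2 * l)%N by lia.
have hnM : (n * M = c * M + 2 * (l * M))%N by rewrite hn; ring.
have hlps : (l * ps = 2 * (l * M) + l)%N by rewrite hps; ring.
have hn1 : ((n - c.+1) * M = 2 * (l * M) - M)%N.
  have e : (n - c.+1 = 2 * l - 1)%N by lia.
  by rewrite e mulnBl mul1n mulnA.
have hc1 : ((c.+1 - 1) * M = c * M)%N by rewrite subn1.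
have hlM : (M <= l * M)%N by rewrite leq_pmull //; lia.
rewrite -/E1 hc1 in s1; rewrite -/E2 hn1 in s2.
rewrite eDg eacond.
have hiff : ((l * ps - 1 - (M - (j == n)))%N == (A + (E2 - B))%N) =
            (A == B + (if (j <= c)%N then l - 1 else l))%N.
  by apply: (@arith_deg _ _ _ _ _ _ _ _ _ (l * M)) => //; lia.
rewrite hiff; case: eqP => hA; last by rewrite /= !mulr0.
have eS : \prod_(1 <= i < n) (z n - z i) ^+ xe j i (b i) =
   (-1) ^+ (n * M - l * ps) * \prod_(1 <= i < n) (z i - z n) ^+ xe j i (b i).
  rewrite (eq_bigr (fun i => ((-1) ^+ xe j i (b i) * (z i - z n) ^+ xe j i (b i) : F))); last first.
    by move=> i _; rewrite -exprNn opprB.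
  rewrite big_split /= prodrXr eXe; congr (_ ^+ _ * _).
  have hj1 : (1 <= j)%N by case/andP: hj.
  have hl1 : (1 <= l)%N by case/andP: hl.
  exact: (arith_sign hnM hlps s1 hA hj1 hl1 hAle).
rewrite eS meval_Xmon mulr1.
have mag := @magnitude j b hj hle' hA.
have sq : (-1) ^+ (n * M - l * ps) * (-1) ^+ (n * M - l * ps) = 1 :> F.
  by rewrite -exprMn mulrNN mulr1 expr1n.
rewrite -mulr_natr -/b.
transitivity (((-1) ^+ (n * M - l * ps) * (-1) ^+ (n * M - l * ps)) *
  ((z c - z n) ^+ l * \prod_(1 <= i < n) (z i - z n) ^+ xe j i (b i)) *
  (\prod_(1 <= i < n) 'C(ee j i, b i))%:R); first by ring.
by rewrite sq mul1r mag eac; ring.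
Qed.

Lemma meval_Qls p s j : MM p s = M -> (1 <= j)%N ->
  (Qls F p s g l j).@[xv] = (if (j < c)%N then xval g l z j.+1 else 1) *
    (Qsum F g l M (if (j <= c)%N then (l - 1)%N else l) j).@[xv].
Proof.
move=> hMM hj; have [h1 [h2 [h3 h4]]] := cfacts.
rewrite /Qls /= hMM; case: ltngtP => h /=.
- by rewrite rmorphM /= meval_xvar //; lia.
- by rewrite mul1r.
- by rewrite mul1r.
Qed.

Lemma part1 p s j : MM p s = M -> (p ^ s = (2 * M).+1)%N -> (1 <= j <= n)%N ->
  (-1) ^+ (n * MM p s - l * p ^ s)%N * (z (n - 2 * l)%N - z n) ^+ l * Itilde p s g l z j
  = x1 g l z ^+ MM p s * (Qls F p s g l j).@[xv].
Proof.
move=> hMM hps hj; have [h1 [h2 [h3 h4]]] := cfacts.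
have hK : (M <= l * p ^ s - 1)%N.
  rewrite hps; case/andP: hl => hl1 _; nia.
rewrite (@Itilde_eq p s j hj hMM hK) prod_expand coef_sum hMM.
rewrite meval_Qls //; last by case/andP: hj.
rewrite meval_Qsum mulrA mulr_sumr mulr_sumr [RHS]big_mkcond /=.
apply: eq_bigr => f _.
rewrite prod_T coef_T term_eq //.
by case: (acond g l M _ f); rewrite ?mulr0.
Qed.
End Main.

Section Const.
Variable F : fieldType.
Variables (g l M : nat).
Hypothesis hl : (1 <= l <= g)%N.
Hypothesis hlM : (l <= M)%N.
Local Notation n := (nn g).
Local Notation c := (cut g l).

Lemma cfacts2 : (c + 2 * l = n /\ 1 <= c /\ c < n /\ 0 < g)%N.
Proof. rewrite /cut /nn; lia. Qed.

Lemma xvar0 i : (xvar F g i)@_0 = 0.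
Proof.
rewrite /xvar; case: insubP => [m _ _|_]; last by rewrite mcoeff0.
by rewrite mcoeffX mnm1_eq0.
Qed.

Lemma Xmon0 (a : {ffun 'I_(n - 1) -> 'I_M.+1}) :
  (Xmon F g l M a)@_0 =
  ((\sum_(1 <= i < c) aa g M a i + \sum_(c.+1 <= i < n) aa g M a i)%N == 0%N)%:R.
Proof.
rewrite /Xmon rmorphM !rmorph_prod /=.
rewrite (eq_bigr (fun i => 0 ^+ aa g M a (i - 1))); last first.
  by move=> i _; rewrite rmorphXn /= xvar0.
rewrite [X in _ * X](eq_bigr (fun i => 0 ^+ aa g M a i)); last first.
  by move=> i _; rewrite rmorphXn /= xvar0.
rewrite !prodrXr -exprD expr0n big_add1 /=.
by congr ((_ + _ == _)%N)%:R; apply: eq_bigr => i _; rewrite subn1.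
Qed.

Definition a0 (c' : nat) : {ffun 'I_(n - 1) -> 'I_M.+1} :=
  [ffun k : 'I_(n - 1) => if (k.+1 == c)%N then (inord c' : 'I_M.+1) else ord0].

Lemma aa_a0 c' i : (c' <= M)%N -> (1 <= i < n)%N ->
  aa g M (a0 c') i = if i == c then c' else 0%N.
Proof.
move=> hc hi; rewrite /aa; case: insubP => [k _ ek|]; last first.
  by move/negP; case; rewrite /nn in hi *; lia.
rewrite ffunE; have -> : k.+1 = i by rewrite /= in ek; lia.
by case: eqP => // _; rewrite inordK.
Qed.

Lemma sum_a0_zero c' m1 m2 : (c' <= M)%N -> (1 <= m1)%N -> (m2 <= n)%N ->
  (forall i, (m1 <= i < m2)%N -> i != c) ->
  (\sum_(m1 <= i < m2) aa g M (a0 c') i = 0)%N.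
Proof.
move=> hc h1 h2 h; rewrite big_nat_cond big1 // => i /andP[hi _].
rewrite aa_a0 //; last by lia.
by rewrite ifN // h.
Qed.

Lemma Qsum0 c' j : (c' <= M)%N ->
  (Qsum F g l M c' j)@_0 = ('C(if c == j then (M - 1)%N else M, c'))%:R.
Proof.
move=> hc; have [h1 [h2 [h3 h4]]] := cfacts2.
rewrite /Qsum raddf_sum /=.
rewrite (eq_bigr (fun a => (acoef g M j a)%:R *
   ((\sum_(1 <= i < c) aa g M a i + \sum_(c.+1 <= i < n) aa g M a i)%N == 0%N)%:R)); last first.
  by move=> a _; rewrite mcoeffZ Xmon0.
rewrite big_mkcond /=.
have Sa0 : ((\sum_(1 <= i < c) aa g M (a0 c') i + \sum_(c.+1 <= i < n) aa g M (a0 c') i)%N == 0%N).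
  rewrite !sum_a0_zero //; try lia; move=> i hi; apply/eqP; lia.
have Ca0 : acond g l M c' (a0 c').
  rewrite /acond big_nat_recr //= aa_a0 //; last by lia.
  rewrite eqxx !sum_a0_zero //; try lia; move=> i hi; apply/eqP; lia.
have uniq_a : forall a, acond g l M c' a ->
   ((\sum_(1 <= i < c) aa g M a i + \sum_(c.+1 <= i < n) aa g M a i)%N == 0%N) -> a = a0 c'.
  move=> a; rewrite /acond big_nat_recr //= => /eqP hA.
  rewrite addn_eq0 => /andP[hS1 hS2].
  move: hA; rewrite (eqP hS1) (eqP hS2) add0n => hac.
  apply/ffunP => k; apply: val_inj; rewrite /= ffunE -(aaS g M a k).
  case: eqP => hk.
    by rewrite hk hac inordK.
  have hkn : (k.+1 < n)%N by have := ltn_ord k; rewrite /nn in h3 *; lia.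
  case: (ltnP k.+1 c) => hkc.
    move: hS1; rewrite sum_nat_seq_eq0 => /allP /(_ k.+1).
    by rewrite mem_index_iota hkc /= => /(_ isT) /eqP.
  move: hS2; rewrite sum_nat_seq_eq0 => /allP /(_ k.+1).
  rewrite mem_index_iota hkn andbT.
  have -> : (c < k.+1)%N by move/eqP: hk; lia.
  by move=> /(_ isT) /eqP.
rewrite (eq_bigr (fun a => if a == a0 c' then (acoef g M j (a0 c'))%:R else 0)); last first.
  move=> a _; case: (eqVneq a (a0 c')) => [->|ha]; first by rewrite Ca0 Sa0 mulr1.
  case: ifP => // hca; case hS: (_ == 0%N); last by rewrite mulr0.
  by move: ha; rewrite (uniq_a a hca hS) eqxx.
rewrite -big_mkcond big_pred1_eq; congr (_%:R).
rewrite /acoef (eq_big_nat _ _ (F2 := fun i => if i == c then 'C(if c == j then (M - 1)%N else M, c') else 1%N)); last first.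
  move=> i hi; rewrite aa_a0 //; case: (eqVneq i c) => [->|hic]; first by rewrite ?eqxx.
  by rewrite bin0.
rewrite -big_mkcond big_nat1_eq ifT //; lia.
Qed.

Lemma Qls0 p s j : MM p s = M ->
  (Qls F p s g l j)@_0 = if (j < c)%N then 0 else if j == c then ('C(M - 1, l - 1))%:R
                          else ('C(M, l))%:R.
Proof.
move=> hMM; rewrite /Qls /= hMM; case: ltngtP => h.
- by rewrite rmorphM /= xvar0 mul0r.
- by rewrite Qsum0 // ifN //; apply/eqP; lia.
- by rewrite Qsum0 ?h ?eqxx //; lia.
Qed.
End Const.

Theorem theorem9p3 (F : numFieldType) (p s g l : nat) :
  prime p -> odd p -> (0 < g)%N -> (nn g < p)%N -> (1 <= s)%N ->
  (1 <= l <= g)%N ->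
  (forall z : nat -> F,
     (forall i j : nat, (1 <= i)%N -> (i < j)%N -> (j <= nn g)%N -> z i != z j) ->
     forall j : nat, (1 <= j <= nn g)%N ->
       (-1) ^+ (nn g * MM p s - l * p ^ s) * (z (nn g - 2 * l)%N - z (nn g)) ^+ l
         * Itilde p s g l z j
       = x1 g l z ^+ MM p s * (Qls F p s g l j).@[xpt g l z])
  /\
  (forall j : nat, (1 <= j <= nn g)%N ->
     (Qls F p s g l j)@_mnm0
     = ('C(MM p s, l))%:R *
       (if (j < nn g - 2 * l)%N then 0
        else if j == (nn g - 2 * l)%N then l%:R / (MM p s)%:R
        else 1)).
Proof.
move=> hp hodd hg hpn hs hl.
have hoddX : odd (p ^ s) by rewrite oddX hodd orbT.
have hps : (p ^ s = (2 * MM p s).+1)%N.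
  rewrite /MM; set x := (p ^ s)%N.
  have e := odd_double_half x; rewrite hoddX /= in e.
  rewrite -{2}e add1n succnK doubleK -e -mul2n; lia.
have hpp : (p <= p ^ s)%N.
  by rewrite -{1}(expn1 p) leq_pexp2l // prime_gt0.
have hMg : (g < MM p s)%N by move: hpn hpp; rewrite hps /nn; lia.
have hM : (1 <= MM p s)%N by lia.
split.
  move=> z zd j hj.
  exact: (@part1 F g l (MM p s) z hl hM zd p s j erefl hps hj).
move=> j hj.
have hlM : (l <= MM p s)%N by case/andP: hl => _ ?; lia.
rewrite (@Qls0 F g l (MM p s) hl hlM p s j erefl) /cut.
case: ltnP => h1; first by rewrite mulr0.
case: eqP => h2; last by rewrite mulr1.
set m := MM p s.
have hbin : (m * 'C(m - 1, l - 1) = l * 'C(m, l))%N.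
  have e := mul_bin_diag m (l - 1).
  have e1 : (l - 1).+1 = l by case/andP: hl => ? _; lia.
  by rewrite e1 -subn1 in e.
have mnz : (m%:R : F) != 0 by rewrite pnatr_eq0 -lt0n.
apply: (mulfI mnz); rewrite -natrM hbin natrM.
by field.
Qed.
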